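(* Let $m\leqslant n$ be natural numbers. For $k\in\{1,\dots,2^m-1\}$ let $Q^k(n)=|\{s\in\{0,\dots,n-1\}: k_s=0\text{ and }b^k_{s+1}\neq 0\}|$. Then $$Q(m,n):=\sum_{k=1}^{2^m-1}Q^k(n)=2^m\left(n-\frac m2-1\right)-n+m+1.$$
   Context: For an integer $k\geqslant 0$, $k_i$ are its binary digits ($k=\sum_ik_i2^i$) and $b^k_{s}=k\bmod 2^s$ for $s\geqslant 0$. ($Q(m,n)$ is the number of multi-controlled gates used in the paper's column-by-column decomposition of an $m$ to $n$ isometry.) *)

(* Defs.v *)
From mathcomp Require Import all_boot all_order all_algebra.
Set Implicit Arguments. Unset Strict Implicit. Unset Printing Implicit Defensive.

Definition bitn (k i : nat) : nat := (k %/ 2 ^ i) %% 2.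

Definition bks (k s : nat) : nat := k %% 2 ^ s.

Definition Qk (n k : nat) : nat :=
  #|[set s : 'I_n | (bitn k s == 0) && (bks k s.+1 != 0)]|.

Definition Qmn (m n : nat) : nat := \sum_(1 <= k < 2 ^ m) Qk n k.

(* Main.v *)
Require Import Defs.
From mathcomp Require Import all_boot all_order all_algebra.
From mathcomp Require Import zify ring.

Lemma bit_lo m j s : s < m -> bitn (2^m + j) s = bitn j s.
Proof.
move=> hs; rewrite /bitn.
have -> : 2^m = 2^(m-s-1) * 2 * 2^s by rewrite -expnSr -expnD; congr (expn 2 _); lia.
rewrite divnMDl ?expn_gt0 // modnMDl //.
Qed.

Lemma bks_lo m j s : s < m -> bks (2^m + j) s.+1 = bks j s.+1.
Proof.
move=> hs; rewrite /bks.
have -> : 2^m = 2^(m-s.+1) * 2^s.+1 by rewrite -expnD; congr (expn 2 _); lia.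
by rewrite modnMDl.
Qed.

Lemma small_hi m j s : j < 2^m -> m <= s -> j < 2^s.
Proof. move=> hj hs; apply: (leq_trans hj); by rewrite leq_exp2l. Qed.

Lemma bit_hi m j s : j < 2^m -> m <= s -> bitn j s = 0.
Proof. move=> hj hs; rewrite /bitn divn_small //; exact: small_hi hj hs. Qed.

Lemma bks_hi m j s : j < 2^m -> m <= s -> bks j s.+1 = j.
Proof. move=> hj hs; rewrite /bks modn_small //; apply: (@small_hi m j s.+1 hj); lia. Qed.

Lemma big_hi m j : j < 2^m -> 2^m + j < 2^m.+1.
Proof. rewrite expnS; lia. Qed.

Lemma bit_m m j : j < 2^m -> bitn (2^m + j) m = 1.
Proof.
move=> hj; rewrite /bitn divnDl // divnn expn_gt0 /= divn_small //.
Qed.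

Lemma bit_top m j s : j < 2^m -> m < s -> bitn (2^m + j) s = 0.
Proof. move=> hj hs; exact: (@bit_hi m.+1 (2^m+j) s (big_hi m j hj) hs). Qed.

Definition cond k s : nat := (bitn k s == 0) && (bks k s.+1 != 0).

Lemma cond_pt m j s : 0 < j < 2^m -> cond j s = cond (2^m + j) s + (s == m).
Proof.
case/andP=> hj0 hj; rewrite /cond.
case: (ltngtP s m) => hs.
- by rewrite bit_lo // bks_lo // addn0.
- rewrite (@bit_hi m j s hj (ltnW hs)) (@bks_hi m j s hj (ltnW hs)).
  rewrite (@bit_top m j s hj hs) (@bks_hi m.+1 _ s (big_hi m j hj) hs) /=; lia.
- subst s; rewrite (@bit_hi m j m hj (leqnn m)) (@bks_hi m j m hj (leqnn m)) (@bit_m m j hj) /=; lia.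
Qed.

Lemma cond_0 m s : cond (2^m) s = (m < s).
Proof.
have h1 := @bit_lo m 0 s; have h2 := @bks_lo m 0 s.
have h3 := @bit_top m 0 s (expn_gt0 2 m); have h4 := @bit_m m 0 (expn_gt0 2 m).
move: h1 h2 h3 h4; rewrite /cond /bitn /bks !addn0 => h1 h2 h3 h4.
case: (ltngtP s m) => hs.
- rewrite h2 // mod0n /= andbF; lia.
- rewrite h3 // modn_small; last by rewrite ltn_exp2l //; lia.
  by rewrite -lt0n expn_gt0.
- by rewrite hs h4.
Qed.

Lemma QkE n k : Qk n k = \sum_(s < n) cond k s.
Proof. rewrite /Qk cardsE -sum1_card big_mkcond /=; apply: eq_bigr=> i _; rewrite /cond unfold_in; by case: ifP. Qed.

Lemma sum_gt m n : \sum_(s<n) ((m < s):nat) = n - m.+1.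
Proof. elim: n => [|n IH]; first by rewrite big_ord0. rewrite big_ord_recr /= IH; case: ltnP => /= h; lia. Qed.

Lemma sum_eq m n : m < n -> \sum_(s<n) (((s:nat) == m):nat) = 1.
Proof.
elim: n => [|n IH] //; rewrite big_ord_recr /= => h.
case: (ltnP m n) => h2; first by rewrite IH // (_ : (n == m) = false) //; apply/negbTE; rewrite neq_ltn h2 orbT.
have -> : n = m by lia.
rewrite eqxx big1 // => i _; rewrite (_ : (i == m :> nat) = false) //; apply/negbTE; by rewrite neq_ltn ltn_ord.
Qed.

Lemma Qk_step m n j : m < n -> 0 < j < 2^m -> Qk n j = Qk n (2^m + j) + 1.
Proof.
by move=> h hj; rewrite !QkE (eq_bigr _ (fun (i:'I_n) _ => cond_pt m j i hj)) big_split /= (sum_eq _ _ h).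
Qed.

Lemma Qk_top m n : Qk n (2^m) = n - m.+1.
Proof. rewrite QkE -(sum_gt m n); apply: eq_bigr => i _; exact: cond_0. Qed.

Lemma Qrec m n : m < n -> Qmn m.+1 n + (2^m - 1) = 2 * Qmn m n + (n - m.+1).
Proof.
move=> h; rewrite /Qmn.
have hp : 0 < 2^m by rewrite expn_gt0.
have hs : 2^m.+1 = 2^m + 2^m by rewrite expnS; lia.
rewrite (@big_cat_nat _ _ _ (2^m)) //=; last by rewrite hs leq_addr.
rewrite (@big_ltn _ _ _ (2^m)) /=; last by rewrite hs; lia.
rewrite hs -{1}(add1n (2^m)) big_addn addnK Qk_top.
have -> : \sum_(1 <= k < 2^m) Qk n k = \sum_(1 <= k < 2^m) (Qk n (k + 2^m) + 1).
  apply: eq_big_nat => i /andP[h1 h2]; have hi : 0 < i < 2^m by rewrite h1 h2. by rewrite (Qk_step m n i h hi) [2^m + i]addnC.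
rewrite big_split /= sum_nat_const_nat; lia.
Qed.

Import GRing.Theory Num.Theory.
Local Open Scope ring_scope.

Theorem corollary1 (m n : nat) (hmn : (m <= n)%N) :
  (Qmn m n)%:R =
    (2 ^+ m) * (n%:R - m%:R / 2 - 1) - n%:R + m%:R + 1 :> rat.
Proof.
elim: m hmn => [|m IH] hmn.
  by rewrite /Qmn big_geq // expr0 mul1r; field.
have h : (m < n)%N by [].
have := Qrec m n h; move/(congr1 (fun x : nat => x%:R : rat)).
have hp : (1 <= 2^m)%N by rewrite expn_gt0.
rewrite natrD natrB // natrD natrB // natrM natrX (IH (ltnW h)) => E.
have -> : (Qmn m.+1 n)%:R = 2%:R * (2 ^+ m * (n%:R - m%:R / 2 - 1) - n%:R + m%:R + 1)
    + (n%:R - m.+1%:R) - ((2%:R:rat) ^+ m - 1) :> rat.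
  by rewrite -E; ring.
rewrite exprS -[m.+1]addn1 natrD; field.
by [].
Qed.
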